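(* Let $n\ge 5$ and let $G$ be a connected simple graph with $n$ vertices and $n+1$ edges. Then \[ \operatorname{avm}(G)\ge \frac{4n-11}{2n-5}. \] Moreover, equality holds if and only if $G\cong \theta_n^1(3,3)$.
   Context: For a finite simple graph $G$, a matching is a set of pairwise vertex-disjoint edges; it is maximal if it is not properly contained in another matching. Let $\mathcal{M}(G)$ be the set of maximal matchings of $G$. The average size of maximal matchings is $\operatorname{avm}(G)=\frac{1}{|\mathcal{M}(G)|}\sum_{M\in\mathcal{M}(G)}|M|$. For $n\ge 4$, $\theta_n^1(3,3)$ denotes the graph obtained from $K_4$ minus an edge (vertices $u,v,x,y$ with edges $uv,ux,uy,vx,vy$; i.e. two triangles sharing the edge $uv$) by attaching $n-4$ pendant edges (new leaves) to the vertex $u$, one of the two vertices of degree $3$. *)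

(* Defs.v *)
From HB Require Import structures.
From mathcomp Require Import all_boot all_order all_algebra.
Set Implicit Arguments. Unset Strict Implicit. Unset Printing Implicit Defensive.
Import Order.TTheory GRing.Theory Num.Theory.

Section Graphs.
Variable T : finType.
Variable e : rel T.

Definition simple_graph : Prop := symmetric e /\ irreflexive e.

Definition edges : {set {set T}} :=
  [set A : {set T} | [exists x, exists y, e x y && (A == [set x; y])]].

Definition connected_graph : Prop := forall x y : T, connect e x y.

Definition matching (M : {set {set T}}) : bool :=
  (M \subset edges) &&
  [forall A in M, forall B in M, (A != B) ==> [disjoint A & B]].

Definition maximal_matching (M : {set {set T}}) : bool :=
  matching M && [forall M' : {set {set T}}, (matching M' && (M \subset M')) ==> (M' == M)].

Definition max_matchings : {set {set {set T}}} := [set M | maximal_matching M].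

Definition avm : rat :=
  ((\sum_(M in max_matchings) #|M|)%:R / (#|max_matchings|)%:R)%R.

End Graphs.

(* theta_n^1(3,3) on vertex set 'I_n: u = 0, v = 1, x = 2, y = 3;
   edges uv, ux, uy, vx, vy, and pendant edges u--k for 4 <= k < n. *)
Definition theta_base (i j : nat) : bool :=
  [|| (i == 0) && (j == 1), (i == 0) && (j == 2), (i == 0) && (j == 3),
      (i == 1) && (j == 2), (i == 1) && (j == 3) | (i == 0) && (4 <= j)].

Definition theta_rel (n : nat) : rel 'I_n :=
  fun i j => theta_base i j || theta_base j i.

Definition isomorphic (T T' : finType) (e : rel T) (e' : rel T') : Prop :=
  exists f : T -> T', bijective f /\ forall x y, e x y = e' (f x) (f y).
Arguments theta_rel n : clear implicits.

(* Main.v *)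
Require Import Defs.
From HB Require Import structures.
From mathcomp Require Import all_boot all_order all_algebra.
From mathcomp Require Import zify.
From Stdlib Require Classical_Prop.
Import Order.TTheory GRing.Theory Num.Theory.
Set Implicit Arguments. Unset Strict Implicit. Unset Printing Implicit Defensive.

Lemma disjP (T : finType) (A B : {set T}) :
  reflect (forall x, x \in A -> x \in B -> False) [disjoint A & B].
Proof.
rewrite -setI_eq0; apply: (iffP eqP) => [H x xA xB| H].
  have: x \in A :&: B by rewrite inE xA xB.
  by rewrite H inE.
apply/setP => x; rewrite inE in_set0; apply/negP => /andP[]; exact: H.
Qed.

Section G.
Variable T : finType.
Variable e : rel T.
Hypothesis esym : symmetric e.
Hypothesis eirr : irreflexive e.



Lemma set2C' (x y : T) : [set x; y] = [set y; x].
Proof. by rewrite setUC. Qed.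

Lemma edgesP X : reflect (exists x y, e x y /\ X = [set x; y]) (X \in edges e).
Proof.
rewrite inE; apply: (iffP existsP) => [[x /existsP[y /andP[exy /eqP->]]]|[x [y [exy ->]]]].
  by exists x, y.
by exists x; apply/existsP; exists y; rewrite exy eqxx.
Qed.

Lemma edge2 x y : e x y -> [set x; y] \in edges e.
Proof. by move=> h; apply/edgesP; exists x, y. Qed.

Lemma edge_at X u : X \in edges e -> u \in X -> exists a, e u a /\ X = [set u; a].
Proof.
move=> /edgesP[x [y [exy ->]]]; rewrite !inE => /orP[]/eqP->.
  by exists y.
by exists x; split; [rewrite esym | exact: set2C'].
Qed.

Lemma neq_of_e x y : e x y -> x != y.
Proof. by apply: contraTneq => ->; rewrite eirr. Qed.

Lemma matching_disj M X Y t : matching e M -> X \in M -> Y \in M ->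
  t \in X -> t \in Y -> X = Y.
Proof.
case/andP=> _ /forall_inP H hX hY tX tY; apply/eqP; apply/negPn/negP => nXY.
have /forall_inP /(_ Y hY) := H X hX; rewrite nXY /= => /disjP /(_ t tX).
by rewrite tY => /(_ isT).
Qed.

Lemma maxP M X : maximal_matching e M -> X \in edges e ->
  (forall Y, Y \in M -> [disjoint X & Y]) -> False.
Proof.
move=> /andP[mM /forallP maxM] hX hD.
have Xn : X \notin M.
  apply/negP => XM; have := hD X XM; case/edgesP: hX => x [y [_ ->]].
  by move/disjP/(_ x); rewrite !inE eqxx /= => /(_ isT isT).
have mM' : matching e (X |: M).
  case/andP: mM => sM /forall_inP pM.
  apply/andP; split.
    by apply/subsetP => Z; rewrite in_setU1 => /orP[/eqP->//|/(subsetP sM)].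
  apply/forall_inP => A; rewrite in_setU1 => /orP[/eqP->|AM];
    apply/forall_inP => B; rewrite in_setU1 => /orP[/eqP->|BM]; apply/implyP => nAB.
  - by rewrite eqxx in nAB.
  - exact: hD.
  - by rewrite disjoint_sym; apply: hD.
  - by have /forall_inP/(_ B BM)/implyP := pM A AM; apply.
have := maxM (X |: M); rewrite mM' subsetUr /= => /eqP E.
by move: Xn; rewrite -E setU11.
Qed.

Lemma max_of_dom M : matching e M ->
  (forall X, X \in edges e -> exists2 Y, Y \in M & exists t, (t \in X) && (t \in Y)) ->
  maximal_matching e M.
Proof.
move=> mM H; rewrite /maximal_matching mM /=; apply/forallP => M'.
apply/implyP => /andP[mM' sMM']; rewrite eqEsubset sMM' andbT.
apply/subsetP => Z ZM'.
have ZE : Z \in edges e by case/andP: mM' => /subsetP S _; exact: S.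
case: (H Z ZE) => Y YM [t /andP[tZ tY]].
by rewrite (matching_disj mM' ZM' (subsetP sMM' _ YM) tZ tY).
Qed.

Definition cover (p q : T) := forall a b, e a b -> (a \in [set p; q]) || (b \in [set p; q]).

Lemma hit p q X : cover p q -> X \in edges e -> (p \in X) || (q \in X).
Proof.
move=> cv /edgesP[x [y [exy ->]]]; have := cv _ _ exy; rewrite !inE.
by case/orP => /orP[]/eqP->; rewrite eqxx ?orbT.
Qed.


Lemma inj2 (w : T) : injective (fun a => [set w; a]).
Proof.
move=> a b /= E.
have: a \in [set w; b] by rewrite -E set22.
have: b \in [set w; a] by rewrite E set22.
by rewrite !inE => /orP[]/eqP E1 /orP[]/eqP E2; congruence.
Qed.

Lemma cover_sym p q : cover p q -> cover q p.
Proof. by move=> cv a b h; rewrite set2C'; apply: cv. Qed.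

Lemma max_sub M : maximal_matching e M -> M \subset edges e.
Proof. by case/andP => /andP[]. Qed.

Lemma max_match M : maximal_matching e M -> matching e M.
Proof. by case/andP. Qed.

Lemma covered p q M x y : maximal_matching e M -> e p q -> cover p q ->
  [set p; q] \notin M -> x != y -> e p x -> e p y -> x != q -> y != q ->
  exists2 Y, Y \in M & p \in Y.
Proof.
move=> Hmax epq cv npq xy epx epy xq yq.
have sM := subsetP (max_sub Hmax); have mM := max_match Hmax.
case: (boolP [exists Y in M, p \in Y]) => [/exists_inP[Y YM pY]|nP]; first by exists Y.
exfalso.
have nP' Y : Y \in M -> p \notin Y.
  by move=> YM; apply/negP => pY; move/negP: nP; apply; apply/exists_inP; exists Y.
case: (boolP [exists Y in M, q \in Y]) => [/exists_inP[Yq YqM qY]|nQ].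
  case: (edge_at (sM _ YqM) qY) => b [eqb Yqe].
  have [z [epz zq zb]] : exists z, [/\ e p z, z != q & z != b].
    case: (eqVneq x b) => [xb|xb]; last by exists x.
    by exists y; split => //; rewrite -xb eq_sym.
  apply: (maxP Hmax (edge2 epz)) => Y YM; apply/disjP => t tpz tY.
  have := hit cv (sM _ YM); rewrite (negPf (nP' _ YM)) /= => qY'.
  have EY := matching_disj mM YM YqM qY' qY; subst Y.
  have pYq := nP' _ YqM.
  move: tpz tY pYq; rewrite Yqe !inE => /orP[]/eqP-> /orP[]/eqP E; subst.
  - by rewrite eirr in epq.
  - by rewrite eqxx orbT.
  - by rewrite eqxx in zq.
  - by rewrite eqxx in zb.
apply: (maxP Hmax (edge2 epq)) => Y YM; apply/disjP => t; rewrite !inE.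
case/orP=> /eqP-> tY; first by move: (nP' _ YM); rewrite tY.
by move/negP: nQ; apply; apply/exists_inP; exists Y.
Qed.

Section Cover.
Variables u v : T.
Hypothesis euv : e u v.
Hypothesis cv : cover u v.
Hypothesis hconn : forall w, w != u -> w != v -> e u w || e v w.
Hypothesis hE : #|edges e| = #|T|.+1.

Lemma nuv : u != v. Proof. exact: neq_of_e euv. Qed.
Definition NA := [set a | e u a & a != v].
Definition NB := [set b | e v b & b != u].

Lemma inNA a : (a \in NA) = e u a && (a != v). Proof. by rewrite inE. Qed.
Lemma inNB a : (a \in NB) = e v a && (a != u). Proof. by rewrite inE. Qed.

Lemma uNvb b : b \in NB -> u \notin [set v; b].
Proof. by rewrite inNB !inE => /andP[_ bu]; rewrite (negPf nuv) eq_sym. Qed.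
Lemma vNua a : a \in NA -> v \notin [set u; a].
Proof. by rewrite inNA !inE => /andP[_ av]; rewrite eq_sym (negPf nuv) eq_sym. Qed.

Lemma edges_dec : edges e =
  [set [set u; v]] :|: [set [set u; a] | a in NA] :|: [set [set v; b] | b in NB].
Proof.
apply/setP => X; apply/idP/idP.
  move=> XE; rewrite !in_setU in_set1; case/orP: (hit cv XE) => [uX|vX].
    case: (edge_at XE uX) => a [eua ->].
    case: (eqVneq a v) => [->|nav]; first by rewrite eqxx.
    by apply/orP; left; apply/orP; right; apply/imsetP; exists a; rewrite // inNA eua.
  case: (edge_at XE vX) => b [evb ->].
  case: (eqVneq b u) => [->|nbu]; first by rewrite set2C' eqxx.
  by apply/orP; right; apply/imsetP; exists b; rewrite // inNB evb.
rewrite !in_setU in_set1 => /orP[/orP[/eqP->|/imsetP[a aA ->]]|/imsetP[b bB ->]].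
- exact: edge2.
- by apply: edge2; move: aA; rewrite inNA => /andP[].
- by apply: edge2; move: bB; rewrite inNB => /andP[].
Qed.

Lemma card_edges : #|edges e| = 1 + #|NA| + #|NB|.
Proof.
rewrite edges_dec cardsU cardsU cards1 !card_imset; try exact: inj2.
have -> : [set [set u; v]] :&: [set [set u; a] | a in NA] = set0.
  apply/eqP; rewrite setI_eq0; apply/disjP => Y; rewrite in_set1 => /eqP->.
  case/imsetP => a aA E; move: (vNua aA); rewrite -E set22 //.
have -> : ([set [set u; v]] :|: [set [set u; a] | a in NA]) :&:
    [set [set v; b] | b in NB] = set0.
  apply/eqP; rewrite setI_eq0; apply/disjP => Y.
  have: Y \in [set [set u; v]] :|: [set [set u; a] | a in NA] -> u \in Y.
    rewrite in_setU in_set1 => /orP[/eqP->|/imsetP[a _ ->]]; exact: set21.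
  move=> H /H uY /imsetP[b bB E]; move: (uNvb bB); rewrite -E uY //.
by rewrite !cards0 !subn0.
Qed.

Lemma NAUNB : NA :|: NB = ~: [set u; v].
Proof.
apply/setP => w; rewrite !inE.
case: (eqVneq w u) => [->|wu]; first by rewrite eirr (negPf nuv) andbF.
case: (eqVneq w v) => [->|wv]; first by rewrite eirr andbF.
by rewrite !andbT /=; apply: hconn.
Qed.

Lemma hAB : #|NA| + #|NB| = #|T|.
Proof. by have := card_edges; rewrite hE; lia. Qed.

Lemma hI : #|NA :&: NB| = 2.
Proof.
have h1 := cardsU NA NB; rewrite NAUNB in h1.
have h2 := cardsC [set u; v]; rewrite cards2 nuv in h2.
have h3 : #|NA :&: NB| <= #|NA| by apply: subset_leq_card; apply: subsetIl.
have := hAB; lia.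
Qed.

Definition mmp (p : T * T) := [set [set u; p.1]; [set v; p.2]].
Definition S := setX NA NB :\: [set (x, x) | x in NA :&: NB].

Lemma memS a b : ((a, b) \in S) = [&& a \in NA, b \in NB & a != b].
Proof.
rewrite in_setD in_setX /=.
have -> : ((a, b) \in [set (x, x) | x in NA :&: NB]) = (a == b) && (a \in NA :&: NB).
  apply/imsetP/andP => [[x xI [-> ->]]|[/eqP-> h]]; first by rewrite eqxx.
  by exists b.
rewrite inE; case: eqVneq => [->|ab]; case: (_ \in NA); case: (_ \in NB) => //=; rewrite ?andbT //.
Qed.

Lemma cardS : #|S| = #|NA| * #|NB| - 2.
Proof.
rewrite cardsD cardsX; congr (_ - _).
rewrite (setIidPr _).
  rewrite card_imset ?hI //; by move=> x y [].
apply/subsetP => p /imsetP[x]; rewrite inE => /andP[xA xB] ->.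
by rewrite in_setX xA xB.
Qed.

Lemma disj_uv a b : a \in NA -> b \in NB -> a != b ->
  [disjoint [set u; a] & [set v; b]].
Proof.
have nuv' := nuv.
rewrite inNA inNB => /andP[_ av] /andP[_ bu] ab.
apply/disjP => t; rewrite !inE => /orP[]/eqP-> /orP[]/eqP E; subst.
- by rewrite eqxx in nuv'.
- by rewrite eqxx in bu.
- by rewrite eqxx in av.
- by rewrite eqxx in ab.
Qed.

Lemma mm_max a b : a \in NA -> b \in NB -> a != b -> maximal_matching e (mmp (a, b)).
Proof.
move=> aA bB ab; apply: max_of_dom.
  apply/andP; split.
    apply/subsetP => Y; rewrite /mmp in_set2 /= => /orP[]/eqP->; apply: edge2.
      by move: aA; rewrite inNA => /andP[].
    by move: bB; rewrite inNB => /andP[].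
  apply/forall_inP => A; rewrite /mmp !inE /= => /orP[]/eqP->;
  apply/forall_inP => B; rewrite !inE /= => /orP[]/eqP->; rewrite ?eqxx //=.
    by apply/implyP => _; exact: disj_uv.
  by apply/implyP => _; rewrite disjoint_sym; exact: disj_uv.
move=> X XE; case/orP: (hit cv XE) => tX.
  by exists [set u; a]; [rewrite /mmp !inE eqxx | exists u; rewrite tX set21].
by exists [set v; b]; [rewrite /mmp !inE eqxx orbT | exists v; rewrite tX set21].
Qed.

Lemma uv_max : maximal_matching e [set [set u; v]].
Proof.
apply: max_of_dom.
  apply/andP; split.
    by apply/subsetP => Y; rewrite inE => /eqP->; apply: edge2.
  by apply/forall_inP => A; rewrite inE => /eqP->; apply/forall_inP => B;
    rewrite inE => /eqP->; rewrite eqxx.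
move=> X XE; exists [set u; v]; first by rewrite inE.
by case/orP: (hit cv XE) => tX; [exists u; rewrite tX set21 | exists v; rewrite tX set22].
Qed.


Lemma max_char M : maximal_matching e M ->
  M = [set [set u; v]] \/ exists2 p, p \in S & M = mmp p.
Proof.
move=> Hmax; have sM := subsetP (max_sub Hmax); have mM := max_match Hmax.
have nuv' := nuv.
case: (boolP ([set u; v] \in M)) => [uvM|uvM].
  left; apply/setP => Y; rewrite in_set1; apply/idP/eqP => [YM|->//].
  case/orP: (hit cv (sM _ YM)) => tY.
    by apply: (matching_disj mM YM uvM tY); rewrite set21.
  by apply: (matching_disj mM YM uvM tY); rewrite set22.
right.
have /cards2P [x [y [xy Exy]]] : #|NA :&: NB| == 2 by rewrite hI.
have : x \in NA :&: NB by rewrite Exy set21.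
have : y \in NA :&: NB by rewrite Exy set22.
rewrite !inE => /andP[/andP[euy yv] /andP[evy yu]] /andP[/andP[eux xv] /andP[evx xu]].
have [Yu YuM uYu] := covered Hmax euv cv uvM xy eux euy xv yv.
have evu : e v u by rewrite esym.
have uvM' : [set v; u] \notin M by rewrite set2C'.
have [Yv YvM vYv] := covered Hmax evu (cover_sym cv) uvM' xy evx evy xu yu.
case: (edge_at (sM _ YuM) uYu) => a [eua Eu].
case: (edge_at (sM _ YvM) vYv) => b [evb Ev].
have av : a != v by apply: contraNneq uvM => av; rewrite -av -Eu.
have bu : b != u by apply: contraNneq uvM' => bu; rewrite -bu -Ev.
have ab : a != b.
  apply/eqP => ab.
  have aYu : a \in Yu by rewrite Eu set22.
  have aYv : a \in Yv by rewrite Ev ab set22.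
  have EY := matching_disj mM YuM YvM aYu aYv.
  move: vYv; rewrite -EY Eu !inE => /orP[]/eqP E.
    by rewrite E eqxx in nuv'.
  by rewrite E eqxx in av.
exists (a, b); first by rewrite memS inNA inNB eua av evb bu ab.
apply/setP => Y; rewrite /mmp in_set2 /=; apply/idP/idP.
  move=> YM; case/orP: (hit cv (sM _ YM)) => tY.
    by rewrite (matching_disj mM YM YuM tY uYu) Eu eqxx.
  by rewrite (matching_disj mM YM YvM tY vYv) Ev eqxx orbT.
by case/orP => /eqP ->; [rewrite -Eu | rewrite -Ev].
Qed.

Lemma notin_img : [set [set u; v]] \notin [set mmp p | p in S].
Proof.
apply/imsetP => [[[a b]]]; rewrite memS => /and3P[aA bB ab] E.
have : [set v; b] \in [set [set u; v]] by rewrite E /mmp in_set2 eqxx orbT.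
rewrite in_set1 => /eqP E'; move: (uNvb bB); rewrite E' set21.
by [].
Qed.

Lemma mms_dec : max_matchings e = [set [set u; v]] |: [set mmp p | p in S].
Proof.
apply/setP => M; rewrite inE in_setU1; apply/idP/idP.
  move/max_char => [->|[p pS ->]]; first by rewrite eqxx.
  by apply/orP; right; apply/imsetP; exists p.
case/orP => [/eqP->|/imsetP[[a b] pS ->]]; first exact: uv_max.
by move: pS; rewrite memS => /and3P[]; exact: mm_max.
Qed.

Lemma mmp_inj : {in S &, injective mmp}.
Proof.
move=> [a b] [a' b']; rewrite !memS => /and3P[aA bB _] /and3P[aA' bB' _] E.
have : [set u; a] \in mmp (a', b') by rewrite -E /mmp in_set2 eqxx.
rewrite /mmp in_set2 /= => /orP[]/eqP Ea; last first.
  by move: (uNvb bB'); rewrite -Ea set21.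
have : [set v; b] \in mmp (a', b') by rewrite -E /mmp in_set2 eqxx orbT.
rewrite /mmp in_set2 /= => /orP[]/eqP Eb.
  by move: (vNua aA'); rewrite -Eb set21.
by rewrite (inj2 Ea) (inj2 Eb).
Qed.

Lemma card_mmp p : p \in S -> #|mmp p| = 2.
Proof.
case: p => a b; rewrite memS => /and3P[aA bB _].
rewrite /mmp cards2 /=; case: eqVneq => // E.
by move: (uNvb bB); rewrite -E set21.
Qed.

Lemma sum_mms : \sum_(M in max_matchings e) #|M| = 1 + #|S| * 2.
Proof.
rewrite mms_dec big_setU1 /=; last exact: notin_img.
rewrite cards1 big_imset /=; last exact: mmp_inj.
by rewrite (eq_bigr (fun _ => 2)) ?sum_nat_const // => p; apply: card_mmp.
Qed.

Lemma card_mms : #|max_matchings e| = 1 + #|S|.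
Proof.
by rewrite mms_dec cardsU1 notin_img card_in_imset //; exact: mmp_inj.
Qed.

Lemma avm_cover : avm e = ((1 + #|S| * 2)%:R / (1 + #|S|)%:R)%R.
Proof. by rewrite /avm sum_mms card_mms. Qed.

Lemma center_u : (forall w, w != u -> e u w) -> #|NB| = 2.
Proof.
move=> H.
have : #|~: [set u; v]| <= #|NA|.
  apply: subset_leq_card; apply/subsetP => w; rewrite !inE negb_or => /andP[wu wv].
  by rewrite H.
have h2 := cardsC [set u; v]; rewrite cards2 nuv in h2.
have h3 : #|NA :&: NB| <= #|NA| by apply: subset_leq_card; apply: subsetIl.
have h4 : #|NA| <= #|~: [set u; v]| by rewrite -NAUNB; apply: subset_leq_card; apply: subsetUl.
have := hAB; have := hI; lia.
Qed.

Lemma NA2_center : #|NA| = 2 -> forall w, w != v -> w != u -> e v w.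
Proof.
move=> hA w wv wu.
have E : NA :&: NB = NA by apply/eqP; rewrite eqEcard subsetIl hI hA.
case/orP: (hconn wu wv) => // euw.
have : w \in NA by rewrite inNA euw wv.
by rewrite -E inE inNB => /andP[_ /andP[]].
Qed.

End Cover.
Lemma conn_adj p q : connected_graph e -> cover p q ->
  forall w, w != p -> w != q -> e p w || e q w.
Proof.
move=> hc cv w wp wq.
case/connectP: (hc w p) => sq pth lst.
case: sq pth lst => [/= _ E|z sq /= /andP[ewz _] _]; first by rewrite E eqxx in wp.
have := cv _ _ ewz; rewrite !inE (negPf wp) (negPf wq) /= => /orP[]/eqP Ez; subst z.
  by rewrite (esym p) (esym q) ewz ?orbT.
by rewrite (esym p) (esym q) ewz ?orbT.
Qed.

Lemma exists_max : exists M, maximal_matching e M.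
Proof.
have m0 : matching e set0.
  by rewrite /matching sub0set; apply/forall_inP => A; rewrite in_set0.
case: (@arg_maxnP _ set0 (matching e) (fun M => #|M|) m0) => M mM Hmax.
exists M; rewrite /maximal_matching mM /=; apply/forallP => M'.
apply/implyP => /andP[mM' sub]; rewrite eq_sym eqEcard sub /=; exact: Hmax.
Qed.

Lemma max_ge2 M : (forall p q, e p q -> ~ cover p q) -> (exists X, X \in edges e) ->
  maximal_matching e M -> 2 <= #|M|.
Proof.
move=> ncov [X XE] Hmax.
case: (ltnP 1 #|M|) => // hle; exfalso.
have M0 : #|M| != 0.
  apply/negP => /eqP/cards0_eq M0.
  by apply: (maxP Hmax XE) => Y; rewrite M0 in_set0.
have /cards1P [Y EY] : #|M| == 1 by rewrite eqn_leq hle lt0n M0.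
have : Y \in edges e by apply: (subsetP (max_sub Hmax)); rewrite EY set11.
case/edgesP => a [b [eab EYab]].
apply: (ncov a b eab) => x y exy.
case: (boolP (x \in [set a; b])) => //= hx; case: (boolP (y \in [set a; b])) => //= hy.
exfalso; apply: (maxP Hmax (edge2 exy)) => Z; rewrite EY in_set1 => /eqP->.
rewrite EYab; apply/disjP => t; rewrite in_set2 => /orP[]/eqP-> h.
  by rewrite h in hx.
by rewrite h in hy.
Qed.

End G.

Lemma theta_cov n (i j : 'I_n) : theta_rel n i j -> (i <= 1) || (j <= 1).
Proof.
rewrite /theta_rel /theta_base.
by case: i j => [[|[|[|[|i]]]] hi] [[|[|[|[|j]]]] hj].
Qed.

Lemma theta_center n (i j : 'I_n) : val i = 0 -> val j != 0 -> theta_rel n i j.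
Proof.
rewrite /theta_rel /theta_base.
by case: i j => [[|i] hi] [[|[|[|[|j]]]] hj].
Qed.

Lemma iso_cover (T : finType) (e : rel T) n : 2 <= n -> isomorphic e (theta_rel n) ->
  exists c d, [/\ e c d, cover e c d & forall w, w != c -> e c w].
Proof.
move=> hn [f [[g fg gf] Hf]].
have h0 : 0 < n by lia.
have h1 : 1 < n by lia.
exists (g (Ordinal h0)), (g (Ordinal h1)); split.
- by rewrite Hf !gf.
- move=> a b; rewrite Hf => /theta_cov /orP[] h.
    have : f a = Ordinal h0 \/ f a = Ordinal h1.
      by case: (f a) h => [[|[|k]] hk] _ //; [left | right]; apply/val_inj.
    by case => E; rewrite -(fg a) E !inE eqxx ?orbT.
  have : f b = Ordinal h0 \/ f b = Ordinal h1.
    by case: (f b) h => [[|[|k]] hk] _ //; [left | right]; apply/val_inj.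
  by case => E; rewrite -(fg b) E !inE eqxx ?orbT.
- move=> w wc; rewrite Hf gf; apply: theta_center => //.
  apply/eqP => h; move/eqP: wc; apply; rewrite -(fg w); congr g; exact: val_inj.
Qed.

Definition gmap (T : Type) (c d x y : T) (s : seq T) (k : nat) : T :=
  match k with 0 => c | 1 => d | 2 => x | 3 => y | k'.+4 => nth c s k' end.

Lemma iso_build (T : finType) (e : rel T) n (c d : T) :
  symmetric e -> irreflexive e -> #|T| = n -> e c d -> cover e c d ->
  (forall w, w != c -> w != d -> e c w) -> #|[set w | e d w & w != c]| = 2 ->
  isomorphic e (theta_rel n).
Proof.
move=> esym eirr hT ecd cv hc hD.
have /cards2P [x [y [xy ED]]] : #|[set w | e d w & w != c]| == 2 by rewrite hD.
have : x \in [set w | e d w & w != c] by rewrite ED set21.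
have : y \in [set w | e d w & w != c] by rewrite ED set22.
rewrite !inE => /andP[edy yc] /andP[edx xc].
have cd : c != d := neq_of_e eirr ecd.
have dx : d != x := neq_of_e eirr edx.
have dy : d != y := neq_of_e eirr edy.
have xd : x != d by rewrite eq_sym.
have yd : y != d by rewrite eq_sym.
have ecx : e c x by apply: hc.
have ecy : e c y by apply: hc.
have exy : e x y = false.
  apply/negP => h; have := cv _ _ h.
  by rewrite !inE (negPf xc) (negPf yc) (negPf xd) (negPf yd).
have fe := (ecd, esym d c, ecx, esym x c, ecy, esym y c, edx, esym x d, edy, esym y d,
            exy, esym y x, eirr).
have dc : d != c by rewrite eq_sym.
have cx : c != x by rewrite eq_sym.
have cy : c != y by rewrite eq_sym.
have yx : y != x by rewrite eq_sym.
have fq := (negPf cd, negPf dc, negPf cx, negPf xc, negPf cy, negPf yc, negPf dx, negPf xd,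
            negPf dy, negPf yd, negPf xy, negPf yx).
set P := ~: [set c; d; x; y].
have inP p : (p \in P) = [&& p != c, p != d, p != x & p != y].
  by rewrite !inE !negb_or !andbA.
have pend p : p \in P -> (e c p * e p c * (e d p = false) * (e p d = false) *
    (e x p = false) * (e p x = false) * (e y p = false) * (e p y = false))%type.
  rewrite inP => /and4P[pc pd px py].
  have ecp := hc p pc pd.
  have edp : e d p = false.
    apply/negP => h; have : p \in [set w | e d w & w != c] by rewrite inE h pc.
    by rewrite ED !inE (negPf px) (negPf py).
  have exp : e x p = false.
    apply/negP => h; have := cv _ _ h.
    by rewrite !inE (negPf xc) (negPf xd) (negPf pc) (negPf pd).
  have eyp : e y p = false.
    apply/negP => h; have := cv _ _ h.
    by rewrite !inE (negPf yc) (negPf yd) (negPf pc) (negPf pd).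
  by rewrite !(esym p) ecp edp exp eyp.
have pendq p : p \in P -> (((p == c) = false) * ((c == p) = false) * ((p == d) = false) *
    ((d == p) = false) * ((p == x) = false) * ((x == p) = false) * ((p == y) = false) *
    ((y == p) = false))%type.
  rewrite inP => /and4P[pc pd px py].
  by rewrite ![_ == p]eq_sym (negPf pc) (negPf pd) (negPf px) (negPf py).
have epp p q : p \in P -> q \in P -> e p q = false.
  rewrite !inP => /and4P[pc pd px py] /and4P[qc qd qx qy].
  apply/negP => h; have := cv _ _ h.
  by rewrite !inE (negPf pc) (negPf pd) (negPf qc) (negPf qd).
have h4 : #|[set c; d; x; y]| = 4.
  by rewrite -!setUA !cardsU1 cards1 !inE !fq.
have hP : #|P| = n - 4 by have := cardsC [set c; d; x; y]; rewrite h4 hT => <-; rewrite addKn.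
have n4 : 4 <= n by rewrite -hT -h4; apply: max_card.
set s := enum P.
have memP k : k < n - 4 -> nth c s k \in P.
  by move=> hk; rewrite -mem_enum; apply: mem_nth; rewrite -cardE hP.
have nthinj a b : a < n - 4 -> b < n - 4 -> nth c s a = nth c s b -> a = b.
  by move=> ha hb /eqP; rewrite nth_uniq ?enum_uniq -?cardE ?hP // => /eqP.
have rel a b : a < n -> b < n ->
    e (gmap c d x y s a) (gmap c d x y s b) = theta_base a b || theta_base b a.
  move: a b => [|[|[|[|a]]]] [|[|[|[|b]]]] ha hb /=; rewrite /theta_base /=.
  all: try have pa := memP a (ltac:(clear -ha; lia)).
  all: try have pb := memP b (ltac:(clear -hb; lia)).
  all: try rewrite ?(pend _ pa).
  all: try rewrite ?(pend _ pb).
  all: try rewrite (epp _ _ pa pb).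
  all: rewrite ?fe ?ltnS //.
have ginj a b : a < n -> b < n -> gmap c d x y s a = gmap c d x y s b -> a = b.
{ move: a b => [|[|[|[|a]]]] [|[|[|[|b]]]] ha hb //=.
  all: try have pa := memP a (ltac:(clear -ha; lia)).
  all: try have pb := memP b (ltac:(clear -hb; lia)).
  all: move/eqP; rewrite ?fq //.
  all: try rewrite ?(pendq _ pa) //.
  all: try rewrite ?(pendq _ pb) //.
  move/eqP/nthinj => -> //; clear -ha hb; lia. }
pose G := fun i : 'I_n => gmap c d x y s i.
have Ginj : injective G.
  move=> i j /(ginj _ _ (ltn_ord i) (ltn_ord j)) E; exact: val_inj.
have : bijective G by apply: inj_card_bij => //; rewrite card_ord hT.
case=> F GF FG.
exists F; split; first by exists G.
move=> z w; rewrite -{1}(FG z) -{1}(FG w) /theta_rel; exact: rel.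
Qed.

Lemma frac_le (a b c d : nat) : 0 < b -> 0 < d ->
  ((a%:R / b%:R : rat) <= c%:R / d%:R)%R = (a * d <= c * b).
Proof.
move=> hb hd; rewrite ler_pdivrMr ?ltr0n // mulrAC ler_pdivlMr ?ltr0n //.
by rewrite -!natrM ler_nat.
Qed.

Lemma frac_lt (a b c d : nat) : 0 < b -> 0 < d ->
  ((a%:R / b%:R : rat) < c%:R / d%:R)%R = (a * d < c * b).
Proof.
move=> hb hd; rewrite ltr_pdivrMr ?ltr0n // mulrAC ltr_pdivlMr ?ltr0n //.
by rewrite -!natrM ltr_nat.
Qed.

Lemma frac_eq (a b c d : nat) : 0 < b -> 0 < d ->
  ((a%:R / b%:R : rat) == c%:R / d%:R)%R = (a * d == c * b).
Proof.
move=> hb hd; rewrite eqr_div ?pnatr_eq0 -?lt0n ?hb ?hd //.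
by rewrite -!natrM eqr_nat.
Qed.

Unset Implicit Arguments.

Theorem theorem1p2 (n : nat) (T : finType) (e : rel T) :
  5 <= n -> #|T| = n -> simple_graph e -> connected_graph e ->
  #|edges e| = n.+1 ->
  ((((4 * n - 11)%:R / (2 * n - 5)%:R : rat) <= avm e)%R /\
   (avm e = ((4 * n - 11)%:R / (2 * n - 5)%:R : rat) <-> isomorphic e (theta_rel n))).
Proof.
move=> hn hT [esym eirr] hc hE.
have hE' : #|edges e| = #|T|.+1 by rewrite hT.
have hb0 : 0 < 2 * n - 5 by lia.
have n2 : 2 <= n by lia.
case: (Classical_Prop.classic (exists u v, e u v /\ cover e u v)) => [[u [v [euv cv]]]|ncov].
  have hconn := conn_adj esym hc cv.
  have evu : e v u by rewrite esym.
  have cv' : cover e v u by move=> a b h; rewrite set2C'; apply: cv.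
  have hconn' := conn_adj esym hc cv'.
  rewrite (avm_cover esym eirr euv cv hconn hE') (cardS esym eirr euv cv hconn hE').
  have hab := hAB esym eirr euv cv hE'.
  have hi := hI esym eirr euv cv hconn hE'.
  have ha2 : 2 <= #|NA e u v|.
    by rewrite -hi; apply: subset_leq_card; apply: subsetIl.
  have hb2 : 2 <= #|NB e u v|.
    by rewrite -hi; apply: subset_leq_card; apply: subsetIr.
  have [a Ea] : exists a, #|NA e u v| = a by eexists.
  have [b Eb] : exists b, #|NB e u v| = b by eexists.
  rewrite Ea Eb in hab ha2 hb2 *.
  rewrite hT in hab.
  split; first by rewrite frac_le //; nia.
  split.
    move/eqP; rewrite eq_sym frac_eq // => /eqP h.
    have : a = 2 \/ b = 2 by nia.
    case=> [a2|b2].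
      rewrite a2 in Ea.
      exact: (iso_build esym eirr hT evu cv' (NA2_center esym eirr euv cv hconn hE' Ea) Ea).
    rewrite b2 in Eb.
    exact: (iso_build esym eirr hT euv cv (NA2_center esym eirr evu cv' hconn' hE' Eb) Eb).
  move=> iso.
  have [c [d [ecd cvcd hcen]]] := @iso_cover _ _ n n2 iso.
  have [w hw] : exists w, w \notin [set u; v; c].
    case: (pickP [pred w | w \notin [set u; v; c]]) => [w hw|H]; first by exists w.
    exfalso.
    have h3 : #|[set u; v; c]| <= 3.
      by rewrite -!setUA !cardsU1 cards1; case: (_ \notin _); case: (_ \notin _).
    have : #|T| <= #|[set u; v; c]|.
      rewrite -cardsT; apply: subset_leq_card; apply/subsetP => z _.
      by move: (H z) => /= /negbFE.
    lia.
  move: hw; rewrite !inE !negb_or => /andP[/andP[wu wv] wc].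
  have := cv _ _ (hcen w wc); rewrite !inE (negPf wu) (negPf wv) !orbF.
  case/orP => /eqP Ec; subst c.
    have := center_u esym eirr euv cv hconn hE' hcen; rewrite Eb => b2.
    apply/eqP; rewrite frac_eq //; apply/eqP; nia.
  have := center_u esym eirr evu cv' hconn' hE' hcen.
  rewrite [#|NB e v u|]Ea => a2.
  apply/eqP; rewrite frac_eq //; apply/eqP; nia.
have ncov' : forall p q, e p q -> ~ cover e p q.
  by move=> p q h cvpq; apply: ncov; exists p, q.
have [X XE] : exists X, X \in edges e.
  have : 0 < #|edges e| by rewrite hE.
  by case/card_gt0P => X XE; exists X.
have h2 M : M \in max_matchings e -> 2 <= #|M|.
  by rewrite inE => /(@max_ge2 _ _ M ncov' (ex_intro _ X XE)).
have hN : 0 < #|max_matchings e|.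
  by case: (exists_max e) => M hM; apply/card_gt0P; exists M; rewrite inE.
have hsum : #|max_matchings e| * 2 <= \sum_(M in max_matchings e) #|M|.
  by rewrite -sum_nat_const; apply: leq_sum => M /h2.
have lt : ((4 * n - 11)%:R / (2 * n - 5)%:R < avm e :> rat)%R.
  rewrite /avm frac_lt //; nia.
split; first exact: ltW.
split => [E|iso]; first by rewrite E ltxx in lt.
have [c [d [ecd cvcd _]]] := @iso_cover _ _ n n2 iso.
by exfalso; apply: ncov; exists c, d.
Qed.
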